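(* Let $G$ be a finite simple connected well-dominated graph of order at least $2$ that has an isolatable vertex. Then the Cartesian product $G \,\square\, H$ is not well-dominated for any finite simple connected graph $H$ of order at least $2$.
   Context: A vertex $x$ of $G$ is isolatable if there is an independent set $I$ in $G$ such that $x$ is an isolated vertex of the induced subgraph $G-N[I]$, where $N[I]$ is the closed neighborhood of $I$. A graph is well-dominated if every minimal (with respect to inclusion) dominating set is a minimum dominating set. The Cartesian product $G\,\square\, H$ has vertex set $V(G)\times V(H)$, with $(g_1,h_1)$ adjacent to $(g_2,h_2)$ iff either ($g_1=g_2$ and $h_1h_2\in E(H)$) or ($h_1=h_2$ and $g_1g_2\in E(G)$). *)

(* Defs.v *)
From mathcomp Require Import all_boot.
Set Implicit Arguments. Unset Strict Implicit. Unset Printing Implicit Defensive.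

Definition simple_graph (T : finType) (e : rel T) : Prop :=
  symmetric e /\ irreflexive e.

Definition connected_graph (T : finType) (e : rel T) : Prop :=
  forall x y : T, connect e x y.

Definition cnbhd (T : finType) (e : rel T) (S : {set T}) : {set T} :=
  [set y | (y \in S) || [exists x in S, e x y]].

Definition dominating (T : finType) (e : rel T) (D : {set T}) : Prop :=
  cnbhd e D = [set: T].

Definition minimal_dominating (T : finType) (e : rel T) (D : {set T}) : Prop :=
  dominating e D /\ forall D' : {set T}, D' \proper D -> ~ dominating e D'.

Definition minimum_dominating (T : finType) (e : rel T) (D : {set T}) : Prop :=
  dominating e D /\ forall D' : {set T}, dominating e D' -> #|D| <= #|D'|.

Definition well_dominated (T : finType) (e : rel T) : Prop :=
  forall D : {set T}, minimal_dominating e D -> minimum_dominating e D.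

Definition independent (T : finType) (e : rel T) (I : {set T}) : Prop :=
  forall x y, x \in I -> y \in I -> ~~ e x y.

(* x is an isolated vertex of G - N[I] *)
Definition isolatable (T : finType) (e : rel T) (x : T) : Prop :=
  exists I : {set T}, independent e I /\ x \notin cnbhd e I /\
    forall y, e x y -> y \in cnbhd e I.

Definition cart_prod (T1 T2 : finType) (e1 : rel T1) (e2 : rel T2)
  : rel (T1 * T2) :=
  fun u v => ((u.1 == v.1) && e2 u.2 v.2) || ((u.2 == v.2) && e1 u.1 v.1).

(* Main.v *)
Require Import Defs.
From mathcomp Require Import all_boot zify.
Set Implicit Arguments. Unset Strict Implicit. Unset Printing Implicit Defensive.

Lemma cnbhdE (T : finType) (e : rel T) (S : {set T}) y :
  (y \in cnbhd e S) = (y \in S) || [exists x in S, e x y].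
Proof. by rewrite inE. Qed.

Lemma domP (T : finType) (e : rel T) (D : {set T}) :
  reflect (dominating e D) (cnbhd e D == setT).
Proof. exact: eqP. Qed.

Lemma dom_all (T : finType) (e : rel T) (D : {set T}) :
  dominating e D -> forall y, (y \in D) \/ exists2 x, x \in D & e x y.
Proof.
move=> HD y; have : y \in cnbhd e D by rewrite HD inE.
rewrite cnbhdE => /orP [H|/existsP [x /andP [Hx Hxy]]]; [by left|right; by exists x].
Qed.

Lemma all_dom (T : finType) (e : rel T) (D : {set T}) :
  (forall y, (y \in D) \/ exists2 x, x \in D & e x y) -> dominating e D.
Proof.
move=> H; apply/setP => y; rewrite cnbhdE inE.
case: (H y) => [->//|[x Hx Hxy]]; apply/orP; right; apply/existsP; exists x; by rewrite Hx.
Qed.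

Lemma has_nbr (T : finType) (e : rel T) :
  connected_graph e -> 1 < #|T| -> forall x, exists y, e x y.
Proof.
move=> Hc HT x.
case: (pickP (predC1 x)) => [y Hy|H0]; last first.
  have := cardC1 x; rewrite (eq_card0 H0); lia.
have := Hc x y; case/connectP => p.
case: p => [_ /= Hyx|z p /= /andP [Hxz _] _]; last by exists z.
by move: Hy; rewrite /= Hyx eqxx.
Qed.

Lemma BC (T : finType) (e : rel T) : symmetric e -> irreflexive e ->
  (forall x, exists y, e x y) ->
  exists D, dominating e D /\ (forall D', dominating e D' -> #|D| <= #|D'|) /\
   forall d, d \in D -> exists y, y \notin D /\ e d y /\
      forall d', d' \in D -> e d' y -> d' = d.
Proof.
move=> Hsym Hirr Hnb.
pose P (D : {set T}) := cnbhd e D == setT.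
have PT : P setT by apply/domP/all_dom => y; left; rewrite inE.
pose D0 := [arg min_(D < setT | P D) #|D|].
have [D0P D0min] : P D0 /\ forall D', P D' -> #|D0| <= #|D'|.
  by rewrite /D0; case: arg_minnP => // D HD Hmin; split.
pose f (D : {set T}) := #|[set u in D | [exists v in D, e u v]]|.
pose Q (D : {set T}) := P D && (#|D| == #|D0|).
have QD0 : Q D0 by rewrite /Q D0P eqxx.
pose D1 := [arg max_(D > D0 | Q D) f D].
have [D1Q D1max] : Q D1 /\ forall D', Q D' -> f D' <= f D1.
  by rewrite /D1; case: arg_maxnP => // D HD Hmax; split.
move: D1Q => /andP [/domP D1P /eqP D1c].
exists D1; split => //; split.
  by move=> D' /domP HD'; rewrite D1c; apply: D0min.
move=> d Hd.
case: (boolP [exists y, [&& y \notin D1, e d y & [forall d', (d' \in D1) && e d' y ==> (d' == d)]]]).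
  case/existsP => y /and3P [Hy1 Hy2 /forallP Hy3]; exists y; split => //; split => //.
  by move=> d' Hd' Hey; apply/eqP; move: (Hy3 d'); rewrite Hd' Hey.
move=> Hno.
have nopriv : forall y, y \notin D1 -> e d y -> exists2 d', d' \in D1 & (d' != d) && e d' y.
  move=> y Hy1 Hy2; move/existsPn: Hno => /(_ y); rewrite Hy1 Hy2 /=.
  move/forallPn => [d' ]; rewrite negb_imply => /andP [/andP [H1 H2] H3].
  by exists d' => //; rewrite H2 H3.
have iso : forall v, v \in D1 -> ~~ e d v.
  move=> v Hv; apply/negP => Hdv.
  have : P (D1 :\ d).
    apply/domP/all_dom => y.
    case: (dom_all D1P y) => [Hy|[m Hm Hmy]].
      case: (eqVneq y d) => [->|Hyd].
        right; exists v; last by rewrite Hsym.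
        by rewrite !inE Hv andbT; apply: contraTneq Hdv => ->; rewrite Hirr.
      by left; rewrite !inE Hyd Hy.
    case: (eqVneq m d) => [Emd|Hmd]; last by right; exists m; rewrite // !inE Hmd Hm.
    subst m.
    case: (boolP (y \in D1)) => Hy.
      by left; rewrite !inE Hy andbT; apply: contraTneq Hmy => ->; rewrite Hirr.
    case: (nopriv y Hy Hmy) => d' Hd' /andP [Hne He].
    by right; exists d' => //; rewrite !inE Hne Hd'.
  move=> /D0min; rewrite -D1c (cardsD1 d D1) Hd; lia.
case: (Hnb d) => w Hdw.
have Hw : w \notin D1 by apply: contraTN Hdw => /iso.
case: (nopriv w Hw Hdw) => d' Hd' /andP [Hne Hd'w].
pose D' := w |: (D1 :\ d).
have D'P : P D'.
  apply/domP/all_dom => y.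
  case: (dom_all D1P y) => [Hy|[m Hm Hmy]].
    case: (eqVneq y d) => [->|Hyd]; first by right; exists w; rewrite ?inE ?eqxx // Hsym.
    by left; rewrite !inE Hyd Hy orbT.
  case: (eqVneq m d) => [Emd|Hmd]; last by right; exists m; rewrite // !inE Hmd Hm orbT.
  subst m.
  have Hy : y \notin D1 by apply: contraTN Hmy => /iso.
  case: (nopriv y Hy Hmy) => d'' Hd'' /andP [Hne' He].
  by right; exists d''; rewrite // !inE Hne' Hd'' orbT.
have D'c : #|D'| = #|D0|.
  rewrite cardsU1 !inE negb_and Hw orbT -D1c (cardsD1 d D1) Hd; lia.
have QD' : Q D' by rewrite /Q D'P D'c eqxx.
have : f D1 < f D'.
  apply: proper_card; apply/properP; split.
    apply/subsetP => u; rewrite !inE => /andP [Hu /existsP [v /andP [Hv Huv]]].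
    have Hud : u != d by apply/eqP => Eud; subst u; move: (iso v Hv); rewrite Huv.
    have Hvd : v != d by apply/eqP => Evd; subst v; move: (iso u Hu); rewrite Hsym Huv.
    rewrite Hud Hu orbT /=; apply/existsP; exists v; by rewrite !inE Hvd Hv orbT Huv.
  exists w; last by rewrite inE (negbTE Hw).
  rewrite !inE eqxx /=; apply/existsP; exists d'; rewrite !inE Hne Hd' orbT /=.
  by rewrite Hsym.
by have := D1max D' QD'; lia.
Qed.

Theorem corollary19 (T1 : finType) (e1 : rel T1) :
  simple_graph e1 -> connected_graph e1 -> 1 < #|T1| ->
  well_dominated e1 -> (exists x : T1, isolatable e1 x) ->
  forall (T2 : finType) (e2 : rel T2),
    simple_graph e2 -> connected_graph e2 -> 1 < #|T2| ->
    ~ well_dominated (cart_prod e1 e2).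
Proof.
move=> [sym1 irr1] con1 c1 wd1 [x [I [indI [xnot xnbr]]]] T2 e2 [sym2 irr2] con2 c2 wdP.
pose W := I :|: ~: cnbhd e1 I.
pose R (D : {set T1}) := (D \subset W) && (cnbhd e1 D == setT).
have RW : R W.
  rewrite /R subxx /=; apply/domP/all_dom => y.
  case: (boolP (y \in cnbhd e1 I)) => Hy; last by left; rewrite in_setU in_setC Hy orbT.
  rewrite cnbhdE in Hy; case/orP: Hy => [HyI | /existsP [a /andP [Ha Hay]]].
    by left; rewrite inE HyI.
  by right; exists a; rewrite // inE Ha.
pose M := [arg min_(D < W | R D) #|D|].
have [MR Mmin] : R M /\ forall D', R D' -> #|M| <= #|D'|.
  by rewrite /M; case: arg_minnP => // D HD Hmin; split.
move: MR => /andP [MW /domP MD].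
have Mminimal : minimal_dominating e1 M.
  split => // D' HD' /domP HD'd.
  have : R D' by rewrite /R HD'd andbT; apply: subset_trans (proper_sub HD') MW.
  move/Mmin; have := proper_card HD'; lia.
have MminG := (wd1 M Mminimal).2.
have notinI : forall m, m \in W -> forall y, e1 m y -> y \in I -> False.
  move=> m; rewrite in_setU in_setC => /orP [HmI|Hm] y Hmy HyI.
    by move: (indI m y HmI HyI); rewrite Hmy.
  move: Hm; rewrite cnbhdE negb_or => /andP [_ /existsPn /(_ y)].
  by rewrite HyI sym1 Hmy.
have xM : x \in M.
  case: (dom_all MD x) => [//|[m Hm Hmx]].
  have HmW := subsetP MW m Hm.
  move: HmW; rewrite in_setU in_setC => /orP [HmI|Hm'].
    by move: xnot; rewrite cnbhdE; case/norP => _ /existsPn /(_ m); rewrite HmI Hmx.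
  by move: Hm'; rewrite (xnbr m) // sym1.
have IM : forall a, a \in I -> a \in M.
  move=> a Ha; case: (dom_all MD a) => [//|[m Hm Hma]].
  by case: (notinI m (subsetP MW m Hm) a Hma Ha).
have xI : x \notin I by apply: contra xnot; rewrite cnbhdE => ->.
have Mx : forall u, u != x -> u \in M :\ x \/ exists2 m, m \in M :\ x & e1 m u.
  move=> u Hux; case: (dom_all MD u) => [Hu|[m Hm Hmu]].
    by left; rewrite !inE Hux Hu.
  case: (eqVneq m x) => [Emx|Hmx]; last by right; exists m; rewrite // !inE Hmx Hm.
  subst m; have := xnbr u Hmu; rewrite cnbhdE => /orP [HuI|/existsP [a /andP [Ha Hau]]].
    by left; rewrite !inE Hux IM.
  right; exists a => //; rewrite !inE IM // andbT.
  by apply: contraNneq xI => <-.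
have [D1 [D1D [D1min D1epn]]] := BC sym1 irr1 (has_nbr con1 c1).
have D1c : #|D1| = #|M|.
  by apply/eqP; rewrite eqn_leq D1min // MminG.
have /card_gt0P [h0 _] : 0 < #|T2| by lia.
have [k Hk] := has_nbr con2 c2 h0.
pose E1 := setX D1 [set: T2].
have E1min : minimal_dominating (cart_prod e1 e2) E1.
  split.
    apply/all_dom => -[u h].
    case: (dom_all D1D u) => [Hu|[m Hm Hmu]]; first by left; rewrite !inE Hu.
    by right; exists (m, h); rewrite ?inE ?Hm // /cart_prod /= eqxx Hmu orbT.
  move=> D' /properP [Hsub [[d h] Hin Hnot]] HD'.
  have Hd : d \in D1 by move: Hin; rewrite !inE andbT.
  have [y [Hy1 [Hdy Hyu]]] := D1epn d Hd.
  case: (dom_all HD' (y, h)) => [Hyh|[[m1 m2] Hm He]].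
    by move: (subsetP Hsub _ Hyh); rewrite !inE (negbTE Hy1).
  have Hm1 : m1 \in D1 by move: (subsetP Hsub _ Hm); rewrite !inE andbT.
  move: He; rewrite /cart_prod /= => /orP [/andP [/eqP E _]|/andP [/eqP E He]].
    by subst m1; move: Hy1; rewrite Hm1.
  subst m2; have := Hyu m1 Hm1 He => E; subst m1.
  by move: Hnot; rewrite Hm.
have E1minimum := (wdP E1 E1min).2.
pose D2 := setX (M :\ x) [set: T2] :|: setX [set x] ([set: T2] :\ h0).
have D2D : dominating (cart_prod e1 e2) D2.
  apply/all_dom => -[u h].
  case: (eqVneq u x) => [Eux|Hux].
    subst u; case: (eqVneq h h0) => [Eh|Hh].
      subst h; right; exists (x, k).
        rewrite !inE eqxx /= andbT.
        by apply: contraTneq Hk => ->; rewrite irr2.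
      by rewrite /cart_prod /= eqxx sym2 Hk.
    by left; rewrite !inE eqxx Hh.
  case: (Mx u Hux) => [Hu|[m Hm Hmu]].
    by left; rewrite in_setU in_setX Hu in_setT.
  by right; exists (m, h); rewrite ?in_setU ?in_setX ?Hm ?in_setT // /cart_prod /= eqxx Hmu orbT.
have := E1minimum D2 D2D.
have := (leq_card_setU (setX (M :\ x) [set: T2]) (setX [set x] ([set: T2] :\ h0))).1.
rewrite !cardsX cards1 D1c (cardsD1 x M) xM.
have := cardsD1 h0 [set: T2]; rewrite inE cardsT.
move: (#|M :\ x|) (#|[set: T2] :\ h0|) => a b Hb.
rewrite mul1n mulSn -/D2 -/E1 Hb.
move: (a * #|T2|) => t; lia.
Qed.
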